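(* Let $1\le p\le2$ and let $x=(\xi_n)_{n\in\mathbb{Z}}\in\ell_p(\mathbb{Z})$. Then the closed linear span of $\{x^{(2n)}:n\in\mathbb{Z}\}$ is not equal to $\ell_p(\mathbb{Z})$.
   Context: For $x=(\xi_j)_{j\in\mathbb{Z}}$ and $n\in\mathbb{Z}$, $x^{(n)}=(\xi_{j-n})_{j\in\mathbb{Z}}$ is the shift of $x$ to the right by $n$. *)

(* Defs.v *)
From HB Require Import structures.
From mathcomp Require Import all_boot all_order all_algebra.
From mathcomp Require Import all_classical all_reals all_analysis.
Set Implicit Arguments. Unset Strict Implicit. Unset Printing Implicit Defensive.
Import Order.TTheory GRing.Theory Num.Theory.
Local Open Scope classical_set_scope.
Local Open Scope ring_scope.

Definition lp_sum (R : realType) (p : R) (y : int -> R) : \bar R :=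
  (\esum_(j in [set: int]) ((`|y j| `^ p)%:E))%E.

Definition lp_space (R : realType) (p : R) : set (int -> R) :=
  [set y | (lp_sum p y < +oo)%E].

Definition shift (R : realType) (x : int -> R) (n : int) : int -> R :=
  fun j => x (j - n).

Definition even_shift_span (R : realType) (x : int -> R) : set (int -> R) :=
  [set z | exists s : seq (R * int),
      z = fun j => \sum_(c <- s) c.1 * shift x (2 * c.2) j].

Definition closed_even_shift_span (R : realType) (p : R) (x : int -> R)
  : set (int -> R) :=
  [set y : int -> R | forall e : R, 0 < e ->
      exists2 z, even_shift_span x z & (lp_sum p (fun j : int => (y j - z j)%R) < e%:E)%E].

(* Main.v *)
Require Import Defs.
From HB Require Import structures.
From mathcomp Require Import all_boot all_order all_algebra.
From mathcomp Require Import all_classical all_reals all_analysis.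
From mathcomp Require Import ring lra zify.
Import Order.TTheory GRing.Theory Num.Theory.
Local Open Scope classical_set_scope.
Local Open Scope ring_scope.

Section Aux.
Variable R : realType.
Variable p : R.
Hypothesis p1 : 1 <= p.
Hypothesis p2 : p <= 2.

Lemma p_gt0 : 0 < p. Proof. exact: lt_le_trans ltr01 p1. Qed.

Lemma lp_sum_ge0 (y : int -> R) : (0 <= lp_sum p y)%E.
Proof. by apply: esum_ge0 => i _; rewrite lee_fin powR_ge0. Qed.

Lemma fin_le_lp (y : int -> R) (s : seq int) : uniq s ->
  ((\sum_(m <- s) `|y m| `^ p)%:E <= lp_sum p y)%E.
Proof.
move=> us; rewrite /lp_sum; apply: esum_ge; exists [set` s].
  by split; [exact: finite_seq|].
by rewrite -sumEFin fsbig_seq.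
Qed.

Lemma term_le_lp (y : int -> R) j : ((`|y j| `^ p)%:E <= lp_sum p y)%E.
Proof. by have := @fin_le_lp y [:: j] erefl; rewrite big_seq1. Qed.


Definition dlt (q : int) : int -> R := fun j => if j == q then 1 else 0.

Lemma dlt_lp q : lp_sum p (dlt q) = 1%E.
Proof.
rewrite /lp_sum (eq_esum (b := fun j => if j \in [set q] then 1%E else 0%E)).
  by rewrite -esum_mkcond esum_set1.
move=> j _; rewrite /dlt; case: (eqVneq j q) => [->|jq].
  by rewrite mem_set // normr1 powR1.
rewrite memNset //=; last by apply/eqP. by rewrite normr0 powR0 // gt_eqF // p_gt0.
Qed.

Lemma decay (y : int -> R) : (lp_sum p y < +oo)%E -> forall eta, 0 < eta ->
  exists K : nat, forall m : int, (K < `|m|)%N -> `|y m| `^ p < eta.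
Proof.
move=> Afin eta eta0.
have A0 := lp_sum_ge0 y.
have Af : lp_sum p y \is a fin_num by rewrite ge0_fin_numE.
have : ((fine (lp_sum p y) - eta)%:E < lp_sum p y)%E.
  by rewrite -(fineK Af) lte_fin; lra.
rewrite {2}/lp_sum /esum => /ereal_sup_gt [_ [X [finX _] <-] hX].
move: finX => /finite_seqP [s Xs]; subst X.
move: hX; have -> : [set` s] = [set` undup s].
  by apply/seteqP; split => i /=; rewrite mem_undup.
rewrite -fsbig_seq ?undup_uniq // sumEFin lte_fin => hX.
exists (\max_(i <- s) `|i|%N) => m Km.
have ms : m \notin undup s.
  rewrite mem_undup; apply/negP => ms.
  have := @leq_bigmax_seq _ s xpredT (fun i : int => `|i|%N) m ms isT.
  by move=> h; move: Km; rewrite ltnNge h.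
have := @fin_le_lp y (m :: undup s); rewrite /= ms undup_uniq big_cons => /(_ isT).
rewrite -(fineK Af) lee_fin => h.
lra.
Qed.


Lemma uv_le (u v : R) : 0 <= u <= 1 -> 0 <= v <= 1 -> u * v <= u `^ p + v `^ p.
Proof.
have key : forall w, 0 <= w <= 1 -> w * w <= w `^ p.
  move=> w /andP[w0 w1]; case: (eqVneq w 0) => [->|wn0].
    by rewrite mul0r powR_ge0.
  have -> : w * w = w `^ 2%:R by rewrite powR_mulrn // expr2.
  by apply: ger_powR => //; rewrite w1 andbT lt_def wn0.
wlog uv : u v / u <= v => [H|].
  move=> hu hv; case: (leP u v) => [uv|vu]; first exact: H.
  by rewrite mulrC addrC; apply: H => //; exact: ltW.
move=> /andP[u0 u1] hv; have := key v hv; move: hv => /andP[v0 v1].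
have : u * v <= v * v by rewrite ler_wpM2r.
have := powR_ge0 u p; lra.
Qed.

Lemma lt_of_powR (a b : R) : 0 <= a -> 0 <= b -> a `^ p < b `^ p -> a < b.
Proof.
move=> a0 b0 h; rewrite ltNge; apply/negP => ba.
have := ge0_ler_powR (ltW p_gt0) b0 a0 ba; rewrite leNgt h //.
Qed.

Lemma ab_le (a b t : R) : 1 <= t -> 0 <= a -> 0 <= b -> a <= t -> t * b <= 1 ->
  a * b <= a `^ p / t + t `^ p * b `^ p.
Proof.
move=> t1 a0 b0 aT tb.
have t0 : 0 < t by lra.
have -> : a * b = (t^-1 * a) * (t * b).
  by field; rewrite gt_eqF.
have ti0 : 0 < t^-1 by rewrite invr_gt0.
have ti1 : t^-1 <= 1 by rewrite invr_le1 // ?unitfE ?gt_eqF.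
have hu : 0 <= t^-1 * a <= 1.
  apply/andP; split; first by apply: mulr_ge0 => //; exact: ltW.
  by rewrite mulrC ler_pdivrMr // mul1r.
have hv : 0 <= t * b <= 1.
  by apply/andP; split => //; apply: mulr_ge0 => //; exact: ltW.
apply: (le_trans (uv_le _ _ hu hv)).
rewrite [(t * b) `^ p]powRM ?(ltW t0) // lerD2r mulrC.
by rewrite mulrC [_ / t]mulrC; apply: ge1r_powRZ => //; rewrite ti0 ti1.
Qed.

End Aux.

Section Win.
Variable R : realType.
Variable x : int -> R.

Definition gg (n k : int) : R :=
  x (1 - 2 * k) * Defs.shift x (2 * n) (2 * k) - x (- (2 * k)) * Defs.shift x (2 * n) (2 * k + 1).

Lemma gg_anti n k : gg n (n - k) = - gg n k.
Proof.
rewrite /gg /Defs.shift.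
have e1 : 1 - 2 * (n - k) = 2 * k + 1 - 2 * n by lia.
have e2 : 2 * (n - k) - 2 * n = - (2 * k) by lia.
have e3 : - (2 * (n - k)) = 2 * k - 2 * n by lia.
have e4 : 2 * (n - k) + 1 - 2 * n = 1 - 2 * k by lia.
rewrite e1 e2 e3 e4; ring.
Qed.

Lemma tele (F : int -> R) (s : nat) (c : int) :
  \sum_(0 <= i < s) F (i%:Z + c) - \sum_(0 <= i < s) F (i%:Z + 1 + c)
  = F c - F (s%:Z + c).
Proof.
elim: s => [|s IH]; first by rewrite !big_geq // subrr add0r subrr.
rewrite !big_nat_recr //=.
have -> : (s.+1%:Z + c) = (s%:Z + 1 + c) by lia.
rewrite -[RHS]addr0 -[in RHS](subrr (F (s%:Z + c))).
set a := \sum_(0 <= i < s) _; set b := \sum_(0 <= i < s) _.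
move: IH; rewrite -/a -/b => IH.
have : a - b + F (s%:Z + c) - F (s%:Z + 1 + c) = F c - F (s%:Z + c) + F (s%:Z + c) - F (s%:Z + 1 + c).
  by rewrite IH.
move=> h; rewrite -[LHS]addr0; lra.
Qed.

Lemma shift_lemma (h : int -> R) (L s : nat) (c : int) :
  \sum_(0 <= i < L) h (i%:Z + c) - \sum_(0 <= i < L) h (i%:Z + s%:Z + c)
  = \sum_(0 <= i < s) h (i%:Z + c) - \sum_(0 <= i < s) h (i%:Z + L%:Z + c).
Proof.
elim: L => [|L IH].
  rewrite big_nil big_nil subrr.
  have -> : \sum_(0 <= i < s) h (i%:Z + 0%:Z + c) = \sum_(0 <= i < s) h (i%:Z + c).
    by apply: eq_bigr => i _; rewrite addr0.
  by rewrite subrr.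
rewrite !big_nat_recr //=.
have := tele h s (L%:Z + c).
have E1 : \sum_(0 <= i < s) h (i%:Z + (L%:Z + c)) = \sum_(0 <= i < s) h (i%:Z + L%:Z + c).
  by apply: eq_bigr => i _; rewrite addrA.
have E2 : \sum_(0 <= i < s) h (i%:Z + 1 + (L%:Z + c)) = \sum_(0 <= i < s) h (i%:Z + L.+1%:Z + c).
  by apply: eq_bigr => i _; congr h; lia.
rewrite E1 E2.
have -> : s%:Z + (L%:Z + c) = L%:Z + s%:Z + c by lia.
move: IH; lra.
Qed.


Lemma rev_sum n (P : nat) :
  \sum_(0 <= i < (2 * P + 1)%N) gg n (i%:Z - P%:Z)
  = - \sum_(0 <= i < (2 * P + 1)%N) gg n (i%:Z + n - P%:Z).
Proof.
rewrite big_nat_rev -sumrN; apply: eq_big_nat => i /andP[_ hi].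
have -> : Posz (0 + (2 * P + 1) - i.+1) - P%:Z = n - (i%:Z + n - P%:Z) by lia.
by rewrite gg_anti.
Qed.

Lemma sum_bound (F : nat -> R) (s : nat) (b : R) :
  (forall i, (i < s)%N -> `|F i| <= b) -> `|\sum_(0 <= i < s) F i| <= s%:R * b.
Proof.
move=> h; apply: le_trans (ler_norm_sum _ _ _) _.
apply: le_trans (@ler_sum_nat _ 0 s _ (fun=> b) _) _.
  by move=> i /andP[_ hi]; exact: h.
by rewrite sumr_const_nat subn0 mulr_natl.
Qed.

Lemma gg_small n k (B eta : R) (K : nat) :
  (forall j, `|x j| <= B) -> (forall m, (K < `|m|)%N -> `|x m| <= eta) ->
  (K < `|k|)%N -> `|gg n k| <= 2 * B * eta.
Proof.
move=> hB hD hk; rewrite /gg.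
apply: le_trans (ler_normB _ _) _; rewrite !normrM.
have h1 : `|x (1 - 2 * k)| <= eta by apply: hD; lia.
have h2 : `|x (- (2 * k))| <= eta by apply: hD; lia.
have h3 := hB (2 * k - 2 * n); have h4 := hB (2 * k + 1 - 2 * n).
rewrite /Defs.shift.
have e0 : 0 <= eta by apply: le_trans h1.
have b0 : 0 <= B by apply: le_trans (hB 0).
have := ler_pM (normr_ge0 _) (normr_ge0 _) h1 h3.
have := ler_pM (normr_ge0 _) (normr_ge0 _) h2 h4.
lra.
Qed.

Lemma S_bound n (P K : nat) (B eta : R) :
  (forall j, `|x j| <= B) -> (forall m, (K < `|m|)%N -> `|x m| <= eta) ->
  (K + `|n| <= P)%N ->
  `|\sum_(0 <= i < (2 * P + 1)%N) gg n (i%:Z - P%:Z)| <= 4 * (`|n|%:R * (B * eta)).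
Proof.
move=> hB hD hP.
have B0 : 0 <= B by apply: le_trans (hB 0).
have e0 : 0 <= eta by apply: le_trans (hD (K.+1)%:Z _); rewrite //=.
have w0 : 0 <= `|n|%:R * (B * eta) by rewrite !mulr_ge0.
set L := (2 * P + 1)%N.
set S := \sum_(0 <= i < L) _.
have h2S : 2 * S = S - \sum_(0 <= i < L) gg n (i%:Z + n - P%:Z).
  have hr := rev_sum n P; rewrite -/L -/S in hr; lra.
have hb : forall (c : int), (forall i, (i < `|n|)%N -> (K < `|(i%:Z + c)%R|)%N) ->
   `|\sum_(0 <= i < `|n|) gg n (i%:Z + c)| <= 2 * (`|n|%:R * (B * eta)).
  move=> c hc.
  have -> : 2 * (`|n|%:R * (B * eta)) = `|n|%:R * (2 * B * eta) by ring.
  apply: sum_bound => i hi; apply: gg_small hB hD _; exact: hc.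
case: (lerP 0 n) => n0.
  have := shift_lemma (gg n) L `|n| (- P%:Z).
  have E1 : \sum_(0 <= i < L) gg n (i%:Z + - P%:Z) = S.
    by apply: eq_bigr => i _.
  have E2 : \sum_(0 <= i < L) gg n (i%:Z + `|n|%:Z + - P%:Z) =
            \sum_(0 <= i < L) gg n (i%:Z + n - P%:Z).
    by apply: eq_bigr => i _; congr gg; lia.
  rewrite E1 E2 -h2S => E.
  have hb1 := hb (- P%:Z) (ltac:(move=> i hi; lia)).
  have hb2 : `|\sum_(0 <= i < `|n|) gg n (i%:Z + (L%:Z - P%:Z))| <= 2 * (`|n|%:R * (B * eta)).
  apply: hb => i hi; rewrite /L; clear -hi hP; lia.
  have E3 : \sum_(0 <= i < `|n|) gg n (i%:Z + L%:Z + - P%:Z) =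
            \sum_(0 <= i < `|n|) gg n (i%:Z + (L%:Z - P%:Z)).
    by apply: eq_bigr => i _; congr gg; lia.
  rewrite E3 in E.
  have : `|2 * S| <= 2 * (`|n|%:R * (B * eta)) + 2 * (`|n|%:R * (B * eta)).
    by rewrite E; apply: le_trans (ler_normB _ _) _; exact: lerD.
  rewrite normrM ger0_norm //; lra.
have := shift_lemma (gg n) L `|n| (- P%:Z - `|n|%:Z).
have E1 : \sum_(0 <= i < L) gg n (i%:Z + `|n|%:Z + (- P%:Z - `|n|%:Z)) = S.
  by apply: eq_bigr => i _; congr gg; lia.
have E2 : \sum_(0 <= i < L) gg n (i%:Z + (- P%:Z - `|n|%:Z)) =
          \sum_(0 <= i < L) gg n (i%:Z + n - P%:Z).
  by apply: eq_bigr => i _; congr gg; lia.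
rewrite E1 E2 => E.
have hb1 := hb (- P%:Z - `|n|%:Z) (ltac:(move=> i hi; lia)).
have hb2 := hb (L%:Z - P%:Z - `|n|%:Z) (ltac:(move=> i hi; rewrite /L; lia)).
have E3 : \sum_(0 <= i < `|n|) gg n (i%:Z + L%:Z + (- P%:Z - `|n|%:Z)) =
          \sum_(0 <= i < `|n|) gg n (i%:Z + (L%:Z - P%:Z - `|n|%:Z)).
  by apply: eq_bigr => i _; congr gg; lia.
rewrite E3 in E.
have E4 : 2 * S = - (\sum_(0 <= i < `|n|) gg n (i%:Z + (- P%:Z - `|n|%:Z)) -
     \sum_(0 <= i < `|n|) gg n (i%:Z + (L%:Z - P%:Z - `|n|%:Z))).
  by rewrite -E h2S opprB.
have : `|2 * S| <= 2 * (`|n|%:R * (B * eta)) + 2 * (`|n|%:R * (B * eta)).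
  by rewrite E4 normrN; apply: le_trans (ler_normB _ _) _; exact: lerD.
rewrite normrM ger0_norm //; lra.
Qed.

End Win.

Section Phi.
Variable R : realType.
Variable p : R.
Variable x : int -> R.

Definition phiW (P : nat) (f : int -> R) : R :=
  \sum_(0 <= i < (2 * P + 1)%N)
    (x (1 - 2 * (i%:Z - P%:Z)) * f (2 * (i%:Z - P%:Z))
     - x (- (2 * (i%:Z - P%:Z))) * f (2 * (i%:Z - P%:Z) + 1)).

Lemma phiW_add P f g : phiW P (fun j => f j + g j) = phiW P f + phiW P g.
Proof. by rewrite /phiW -big_split; apply: eq_bigr => i _ /=; ring. Qed.

Lemma phiW_span P (s : seq (R * int)) :
  phiW P (fun j => \sum_(c <- s) c.1 * Defs.shift x (2 * c.2) j)
  = \sum_(c <- s) c.1 * \sum_(0 <= i < (2 * P + 1)%N) @gg _ x c.2 (i%:Z - P%:Z).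
Proof.
rewrite /phiW.
under eq_bigr => i _ do rewrite !mulr_sumr -sumrB.
rewrite exchange_big /=; apply: eq_bigr => c _; rewrite mulr_sumr.
by apply: eq_bigr => i _; rewrite /gg; ring.
Qed.

Lemma sum_le_lp (y : int -> R) (f : nat -> int) L : injective f ->
  (lp_sum p y < +oo)%E ->
  \sum_(0 <= i < L) `|y (f i)| `^ p <= fine (lp_sum p y).
Proof.
move=> fi yf.
have := @fin_le_lp R p y (map f (index_iota 0 L)).
rewrite map_inj_uniq // iota_uniq big_map => /(_ isT).
have Af : lp_sum p y \is a fin_num by rewrite ge0_fin_numE // lp_sum_ge0.
by rewrite -(fineK Af) lee_fin.
Qed.


Lemma phiW_d (P : nat) (d : int -> R) (t : R) : 1 <= p -> p <= 2 -> 1 <= t ->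
  (forall j, `|x j| <= t) -> (forall j, t * `|d j| <= 1) ->
  `|phiW P d| <=
    (\sum_(0 <= i < (2 * P + 1)%N) `|x (1 - 2 * (i%:Z - P%:Z))| `^ p
     + \sum_(0 <= i < (2 * P + 1)%N) `|x (- (2 * (i%:Z - P%:Z)))| `^ p) / t
    + t `^ p * (\sum_(0 <= i < (2 * P + 1)%N) `|d (2 * (i%:Z - P%:Z))| `^ p
     + \sum_(0 <= i < (2 * P + 1)%N) `|d (2 * (i%:Z - P%:Z) + 1)| `^ p).
Proof.
move=> p1 p2 t1 hx hd.
have t0 : 0 < t by lra.
rewrite mulrDr mulrDl !mulr_suml !mulr_sumr -!big_split /=.
apply: le_trans (ler_norm_sum _ _ _) _; apply: ler_sum => i _.
apply: le_trans (ler_normB _ _) _; rewrite !normrM.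
set k := (i%:Z - P%:Z).
have h1 := @ab_le R p p1 p2 _ _ t t1 (normr_ge0 (x (1 - 2 * k))) (normr_ge0 (d (2 * k))) (hx _) (hd _).
have h2 := @ab_le R p p1 p2 _ _ t t1 (normr_ge0 (x (- (2 * k)))) (normr_ge0 (d (2 * k + 1))) (hx _) (hd _).
lra.
Qed.

End Phi.

Lemma inj_a (P : nat) : injective (fun i : nat => 1 - 2 * (i%:Z - P%:Z)).
Proof. by move=> i j /= h; lia. Qed.
Lemma inj_b (P : nat) : injective (fun i : nat => - (2 * (i%:Z - P%:Z))).
Proof. by move=> i j /= h; lia. Qed.
Lemma inj_c (P : nat) : injective (fun i : nat => 2 * (i%:Z - P%:Z)).
Proof. by move=> i j /= h; lia. Qed.
Lemma inj_d (P : nat) : injective (fun i : nat => 2 * (i%:Z - P%:Z) + 1).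
Proof. by move=> i j /= h; lia. Qed.

Lemma dlt_off (i P : nat) (m qq r : int) : m = qq * 2 + r -> 0 <= r -> r < 2 ->
  i%:Z <> P%:Z - qq ->
  2 * (i%:Z - P%:Z) <> 1 - m /\ 2 * (i%:Z - P%:Z) + 1 <> 1 - m.
Proof. move=> h1 h2 h3 h4; split; lia. Qed.

Lemma dlt_on (i P : nat) (m qq r : int) : m = qq * 2 + r -> 0 <= r -> r < 2 ->
  i%:Z = P%:Z - qq ->
  (2 * (i%:Z - P%:Z) = 1 - m /\ 2 * (i%:Z - P%:Z) + 1 <> 1 - m /\ 1 - 2 * (i%:Z - P%:Z) = m)
  \/ (2 * (i%:Z - P%:Z) <> 1 - m /\ 2 * (i%:Z - P%:Z) + 1 = 1 - m /\ - (2 * (i%:Z - P%:Z)) = m).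
Proof.
move=> h1 h2 h3 h4; have hr : r = 0 \/ r = 1 by lia.
by case: hr => hr; [right|left]; lia.
Qed.

Lemma i0_prop (P : nat) (qq : int) : (`|qq| <= P)%N ->
  ((`|(P%:Z - qq)%R|%N)%:Z = P%:Z - qq) /\ (`|(P%:Z - qq)%R| < 2 * P + 1)%N.
Proof. move=> h; split; lia. Qed.

Lemma fin_ineq (R : realType) (S1 S2 S3 S4 A del t T e c0 X : R) :
  S1 <= A -> S2 <= A -> S3 <= del -> S4 <= del -> 0 < t -> 0 < T ->
  X <= (S1 + S2) / t + T * (S3 + S4) -> 2 * A / t <= c0 / 4 -> T * e <= c0 / 8 ->
  del <= e -> X <= c0 / 2.
Proof.
move=> h1 h2 h3 h4 t0 T0 h h5 h6 h7.
have a1 : (S1 + S2) / t <= (2 * A) / t.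
  by rewrite ler_pM2r ?invr_gt0 //; lra.
have a2 : T * (S3 + S4) <= T * (2 * e).
  by rewrite ler_pM2l //; lra.
lra.
Qed.

Theorem lemma3p11 (R : realType) (p : R) (x : int -> R) :
  1 <= p <= 2 -> x \in lp_space p ->
  closed_even_shift_span p x <> lp_space p.
Proof.
move=> /andP[p1 p2] hx Heq.
have xfin : (lp_sum p x < +oo)%E by move: hx; rewrite inE.
have dl : forall q, closed_even_shift_span p x (dlt R q).
  by move=> q; rewrite Heq /lp_space /= dlt_lp // ltry.
have [[m xm]|allz] := pselect (exists m, x m != 0); last first.
  have x0 : forall j, x j = 0.
    by move=> j; apply/eqP; apply/negPn/negP => h; apply: allz; exists j.
  have [z [s ->] hz] := dl 0 1 ltr01.
  have := @term_le_lp R p (fun j => dlt R 0 j - \sum_(c <- s) c.1 * Defs.shift x (2 * c.2) j) 0.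
  rewrite /= /dlt eqxx big1 => [|c _]; last by rewrite /Defs.shift x0 mulr0.
  rewrite subr0 normr1 powR1 => h.
  by have := le_lt_trans h hz; rewrite ltxx.
set A := fine (lp_sum p x).
have A0 : 0 <= A by apply: fine_ge0; exact: lp_sum_ge0.
have Af : lp_sum p x \is a fin_num by rewrite ge0_fin_numE // lp_sum_ge0.
have Ae : lp_sum p x = A%:E by rewrite fineK.
set c0 := `|x m|.
have c0p : 0 < c0 by rewrite normr_gt0.
set t := 1 + A + 8 * A / c0.
have hAc : 0 <= 8 * A / c0 by rewrite divr_ge0 // ?mulr_ge0 // ltW.
have t1 : 1 <= t by rewrite /t; lra.
have t0 : 0 < t by lra.
have xt : forall j, `|x j| <= t.
  move=> j; apply: ltW; apply: (@lt_of_powR R p p1) => //; first lra.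
  have := @term_le_lp R p x j; rewrite Ae lee_fin => h.
  apply: le_lt_trans h _; apply: lt_le_trans (le1r_powR t1 p1).
  rewrite /t; lra.
have tp0 : 0 < t `^ p by apply: powR_gt0.
set qq := (m %/ 2)%Z; set r := (m %% 2)%Z.
have hm : m = qq * 2 + r by rewrite /qq /r -divz_eq.
have r0 : 0 <= r by apply: modz_ge0.
have r2 : r < 2 by apply: ltz_pmod.
set e := Num.min 1 (c0 / 8) / t `^ p.
have mn0 : 0 < Num.min 1 (c0 / 8) by rewrite lt_min ltr01 /=; lra.
have e0 : 0 < e by rewrite /e divr_gt0.
have et : t `^ p * e = Num.min 1 (c0 / 8) by rewrite /e mulrC divfK // gt_eqF.
have [z [s hzs] hz] := dl (1 - m) e e0.
set d := fun j => dlt R (1 - m) j - z j.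
have d0 := @lp_sum_ge0 R p d.
have dfin : (lp_sum p d < +oo)%E by apply: lt_trans hz _; rewrite ltry.
have Dfin : lp_sum p d \is a fin_num by rewrite ge0_fin_numE.
set del := fine (lp_sum p d).
have del0 : 0 <= del by apply: fine_ge0.
have dele : del < e by move: hz; rewrite -/d -(fineK Dfin) lte_fin.
have dt : forall j, t * `|d j| <= 1.
  move=> j; apply: ltW; apply: (@lt_of_powR R p p1) => //.
    by apply: mulr_ge0 => //; exact: ltW.
  rewrite powR1 powRM ?(ltW t0) //.
  have := @term_le_lp R p d j; rewrite -(fineK Dfin) lee_fin -/del => h.
  apply: le_lt_trans (ler_wpM2l (ltW tp0) h) _.
  have : t `^ p * del < t `^ p * e by rewrite ltr_pM2l.
  move=> h2; apply: lt_le_trans h2 _; rewrite et.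
  by rewrite ge_min lexx.
set M := \sum_(c <- s) `|c.1| * `|c.2|%:R.
have M0 : 0 <= M by apply: sumr_ge0 => c _; apply: mulr_ge0.
set eta := c0 / (16 * t * (M + 1)).
have den0 : 0 < 16 * t * (M + 1) by apply: mulr_gt0; [apply: mulr_gt0|]; lra.
have eta0 : 0 < eta by apply: divr_gt0.
have etaE : eta * (16 * t * (M + 1)) = c0 by rewrite /eta divfK // gt_eqF.
have [K hK] := @decay R p x xfin _ (powR_gt0 p eta0).
have hD : forall j, (K < `|j|)%N -> `|x j| <= eta.
  move=> j hj; apply: ltW; apply: (@lt_of_powR R p p1) => //; first exact: ltW.
  exact: hK.
set N := \max_(c <- s) `|c.2|%N.
set P := (K + N + `|qq|)%N.
set L := (2 * P + 1)%N.
have Ez : `|@phiW R x P z| <= c0 / 4.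
  rewrite hzs phiW_span.
  apply: le_trans (ler_norm_sum _ _ _) _.
  have : \sum_(c <- s) `|c.1 * \sum_(0 <= i < L) @gg R x c.2 (i%:Z - P%:Z)|
         <= \sum_(c <- s) (4 * (t * eta)) * (`|c.1| * `|c.2|%:R).
    rewrite big_seq [X in _ <= X]big_seq; apply: ler_sum => c cs.
    rewrite normrM.
    have hc : (K + `|c.2| <= P)%N.
      have := @leq_bigmax_seq _ s xpredT (fun c : R * int => `|c.2|%N) c cs isT.
      by move=> h; rewrite /P -addnA leq_add2l; apply: leq_trans h (leq_addr _ _).
    have := @S_bound R x c.2 P K t eta xt hD hc.
    have := normr_ge0 c.1.
    set S := `|\sum_(0 <= i < _) _|; move=> h1 h2.
    have := ler_wpM2l h1 h2; move=> h3; apply: le_trans h3 _.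
    by rewrite le_eqVlt; apply/orP; left; apply/eqP; ring.
  rewrite -mulr_sumr -/M => h; apply: le_trans h _.
  have : 0 <= t * eta by apply: mulr_ge0; lra.
  move=> te0.
  have : 4 * (t * eta) * M <= 4 * (t * eta) * (M + 1).
    by apply: ler_wpM2l; lra.
  have : 4 * (t * eta) * (M + 1) = c0 / 4.
    by rewrite -etaE; field.
  lra.
have Ed : `|@phiW R x P d| <= c0 / 2.
  have := @phiW_d R p x P d t p1 p2 t1 xt dt.
  have s1 : \sum_(0 <= i < L) `|x (1 - 2 * (i%:Z - P%:Z))| `^ p <= A :=
    @sum_le_lp R p x _ L (inj_a P) xfin.
  have s2 : \sum_(0 <= i < L) `|x (- (2 * (i%:Z - P%:Z)))| `^ p <= A :=
    @sum_le_lp R p x _ L (inj_b P) xfin.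
  have s3 : \sum_(0 <= i < L) `|d (2 * (i%:Z - P%:Z))| `^ p <= del :=
    @sum_le_lp R p d _ L (inj_c P) dfin.
  have s4 : \sum_(0 <= i < L) `|d (2 * (i%:Z - P%:Z) + 1)| `^ p <= del :=
    @sum_le_lp R p d _ L (inj_d P) dfin.
  rewrite -/L.
  move=> h.
  have h3 : (2 * A) / t <= c0 / 4.
    rewrite ler_pdivrMr //.
    have ct : c0 * t = c0 + c0 * A + 8 * A by rewrite /t; field; rewrite gt_eqF.
    have cA : 0 <= c0 * A by apply: mulr_ge0 => //; exact: ltW.
    lra.
  have h5 : t `^ p * e <= c0 / 8 by rewrite et ge_min lexx orbT.
  exact: (@fin_ineq R _ _ _ _ _ _ _ _ _ _ _ s1 s2 s3 s4 t0 tp0 h h3 h5 (ltW dele)).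
set i0 := `|(P%:Z - qq)%R|%N.
have [i0E i0L] : (i0%:Z = P%:Z - qq) /\ (i0 < L)%N.
  by apply: i0_prop; rewrite /P; apply: leq_addl.
have Edl : `|@phiW R x P (dlt R (1 - m))| = c0.
  rewrite /phiW (bigD1_seq i0) ?mem_index_iota ?iota_uniq //= big1 ?addr0.
    have [[a1 [a2 a3]]|[a1 [a2 a3]]] := @dlt_on i0 P m qq r hm r0 r2 i0E.
      rewrite /dlt (introT eqP a1) (negbTE (introN eqP a2)) a3.
      by rewrite mulr1 mulr0 subr0.
    rewrite /dlt (introT eqP a2) (negbTE (introN eqP a1)) a3.
    by rewrite mulr1 mulr0 sub0r normrN.
  move=> i hi.
  have hi' : i%:Z <> P%:Z - qq by rewrite -i0E => /eqP; rewrite eqz_nat (negbTE hi).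
  have [a1 a2] := @dlt_off i P m qq r hm r0 r2 hi'.
  rewrite /dlt (negbTE (introN eqP a1)) (negbTE (introN eqP a2)).
  by rewrite !mulr0 subr0.
have Esplit : @phiW R x P (dlt R (1 - m)) = @phiW R x P d + @phiW R x P z.
  rewrite -phiW_add; congr phiW; apply: funext => j; rewrite /d subrK //.
have := ler_normD (@phiW R x P d) (@phiW R x P z).
rewrite -Esplit Edl => h.
lra.
Qed.
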